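(* Let $p\in P(k,l)\setminus N(k,l)$ be a pairing with $s=(k+l)/2\ge 4$ strings. (1) If $p\notin E(k,l)$, then some capping $p'$ of $p$ satisfies $p'\notin E$ (i.e. $p'$ is a pairing not in $E$ of the corresponding size). (2) If $p\in E(k,l)\setminus N(k,l)$, then some capping $p'$ of $p$ satisfies $p'\in E\setminus N$.
   Context: $P(k,l)$ is the set of pairings (partitions into 2-element blocks, called strings) of $k$ upper and $l$ lower points; the $k+l$ points are numbered $1,\dots,k+l$ counterclockwise starting from the bottom left, and considered cyclically (as points on the boundary of a disk). Two strings $\{a,b\},\{c,d\}$ cross iff exactly one of $c,d$ lies strictly between $a$ and $b$. $E(k,l)\subset P(k,l)$ consists of the pairings in which each string crosses an even number of other strings; $N(k,l)\subset E(k,l)$ consists of the noncrossing pairings (no two strings cross). For $i=1,\dots,k+l$ (indices mod $k+l$), the capping $p^i$ is the pairing of the remaining $k+l-2$ points obtained by joining the $i$-th and $(i+1)$-th points by a semicircle and deleting these two points, so that the strings through them are concatenated into one string (a closed loop, if it arises, is discarded), the remaining points keeping their cyclic order. A capping of $p$ is any $p^i$. *)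

(* Defs.v *)
From mathcomp Require Import all_boot.
Set Implicit Arguments. Unset Strict Implicit. Unset Printing Implicit Defensive.

(* A pairing of n points (points numbered 0..n-1 counterclockwise, i.e. the
   paper's point j+1 is our point j) is encoded as the partner function
   p : nat -> nat, restricted to the domain {0,..,n-1}: a fixed-point-free
   involution of {0,..,n-1}.  The strings are the blocks {x, p x}. *)
Definition is_pairing (n : nat) (p : nat -> nat) : bool :=
  all (fun x => [&& p x < n, p x != x & p (p x) == x]) (iota 0 n).

Definition strictly_between (a b x : nat) : bool := (minn a b < x) && (x < maxn a b).

Definition cross (a b c d : nat) : bool :=
  strictly_between a b c (+) strictly_between a b d.

(* number of strings of p crossing the string through point x;
   each string {y, p y} is counted once, via its smaller endpoint y < p y *)
Definition ncross (n : nat) (p : nat -> nat) (x : nat) : nat :=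
  count (fun y => [&& y < p y, y != x, y != p x & cross x (p x) y (p y)]) (iota 0 n).

Definition isE (n : nat) (p : nat -> nat) : bool :=
  all (fun x => ~~ odd (ncross n p x)) (iota 0 n).

Definition isN (n : nat) (p : nat -> nat) : bool :=
  all (fun x => ncross n p x == 0) (iota 0 n).

(* Capping p^i: join point i and point (i+1) mod n by a semicircle, delete
   these two points, concatenate the strings through them (a closed loop, if
   formed, is discarded), and renumber the remaining n-2 points 0..n-3 in
   increasing order of their old labels (which preserves their cyclic order). *)
Definition cap_rest (n i : nat) : seq nat :=
  [seq x <- iota 0 n | (x != i) && (x != (i.+1 %% n))].

Definition cap_glue (n : nat) (p : nat -> nat) (i : nat) (x : nat) : nat :=
  if p x == i then p (i.+1 %% n)
  else if p x == i.+1 %% n then p i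
  else p x.

Definition cap (n : nat) (p : nat -> nat) (i : nat) : nat -> nat :=
  fun y => index (cap_glue n p i (nth 0 (cap_rest n i) y)) (cap_rest n i).

(* Main.v *)
Require Import Defs.
From mathcomp Require Import all_boot.
From Stdlib Require Import Lia.
Set Implicit Arguments. Unset Strict Implicit. Unset Printing Implicit Defensive.

Lemma count_xor (T : Type) (s : seq T) (P Q : pred T) :
  count P s + count Q s = 2 * count (fun y => P y && Q y) s + count (fun y => P y (+) Q y) s.
Proof.
elim: s => //= y s IH; case: (P y); case: (Q y); rewrite /= ?add0n;
move: IH; rewrite -!plusE -!multE; lia.
Qed.

Lemma count_split (T : Type) (s : seq T) (P R : pred T) :
  count (fun y => P y && R y) s + count (fun y => ~~ P y && R y) s = count R s.
Proof.
elim: s => //= y s IH; case: (P y); case: (R y); rewrite /= ?add0n;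
move: IH; rewrite -!plusE; lia.
Qed.

Lemma pairingP n p : is_pairing n p -> forall x, x < n -> [/\ p x < n, p x != x & p (p x) = x].
Proof.
move=> /allP H x xn; have := H x; rewrite mem_iota add0n xn => /(_ isT) /and3P [a b /eqP c].
by split.
Qed.

Lemma perm_p n p : is_pairing n p -> perm_eq (map p (iota 0 n)) (iota 0 n).
Proof.
move=> H; have P := pairingP H.
apply: uniq_perm; last first.
- move=> x; rewrite mem_iota add0n; apply/mapP/idP.
  + by case=> y; rewrite mem_iota add0n => yn ->; case: (P y yn).
  + move=> xn; exists (p x); first by rewrite mem_iota; case: (P x xn).
    by case: (P x xn).
- exact: iota_uniq.
rewrite map_inj_in_uniq ?iota_uniq //.
move=> x y; rewrite !mem_iota !add0n => xn yn e.
by case: (P x xn) => _ _ <-; case: (P y yn) => _ _ <-; rewrite e.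
Qed.

Lemma count_swap n p (P : pred nat) : is_pairing n p ->
  count P (iota 0 n) = count (fun y => P (p y)) (iota 0 n).
Proof.
move=> H; rewrite -(permP (perm_p H)) count_map; by [].
Qed.

Lemma pairing_even n p : is_pairing n p -> ~~ odd n.
Proof.
move=> H; have P := pairingP H.
have e1 := @count_swap n p (fun y => y < p y) H.
have e2 : count (fun y => p y < p (p y)) (iota 0 n) = count (fun y => ~~ (y < p y)) (iota 0 n).
  apply: eq_in_count => y; rewrite mem_iota add0n => yn; case: (P y yn) => _ ne ->.
  by move: ne; case: ltngtP.
have := count_predC (fun y => y < p y) (iota 0 n); rewrite size_iota.
move: e2 e1 => /= -> ->. move=> <-. by rewrite addnn odd_double.
Qed.

Ltac hyps2lia := repeat match goal with
 | H : is_true (leq _ _) |- _ => move/leP: H => H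
 | H : is_true (@eq_op _ _ _) |- _ => move/eqP: H => H
 | H : is_true (~~ (@eq_op _ _ _)) |- _ => move/eqP: H => H
 | H : is_true (~~ (leq _ _)) |- _ => rewrite -ltnNge in H
 | H : ?b = false |- _ => move/negbT: H => H
 | H : ?b = true |- _ => change (is_true b) in H
 end.
Ltac nlia := hyps2lia; change addn with Nat.add in *; change subn with Nat.sub in *;
  change muln with Nat.mul in *;
  first [ match goal with |- is_true (leq _ _) => apply/leP end
        | match goal with |- is_true (@eq_op _ _ _) => apply/eqP end | idtac ];
  change addn with Nat.add; change subn with Nat.sub; change muln with Nat.mul; lia.

Lemma count_int a b m : count (fun w => (a < w) && (w < b)) (iota 0 m) = minn m b - minn m a.+1.
Proof.
elim: m => [|m IH]; first by rewrite !min0n.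
have -> : iota 0 m.+1 = iota 0 m ++ [:: m] by rewrite -addn1 iotaD.
rewrite count_cat IH /= addn0 /minn.
case h1: (m < b); case h2: (m.+1 < b); case h3: (m < a.+1);
 case h4: (m.+1 < a.+1); case h5: (a < m); simpl; hyps2lia; nlia.
Qed.

Lemma sbE a b c : strictly_between a b c = if a < b then (a < c) && (c < b) else (b < c) && (c < a).
Proof. by rewrite /strictly_between /minn /maxn; case: ifP. Qed.

Lemma L1 n p x : is_pairing n p -> x < n -> odd (ncross n p x) = ~~ odd (x + p x).
Proof.
move=> H xn; have P := pairingP H; case: (P x xn) => pxn nex ppx.
set s := iota 0 n; set sb := strictly_between x (p x).
have mM : minn x (p x) < maxn x (p x).
  rewrite /minn /maxn; case: ifP => //; move: nex; case: ltngtP => //.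
have e0 : count sb s = (maxn x (p x)) - (minn x (p x)).+1.
  rewrite (@eq_count _ _ (fun w => (minn x (p x) < w) && (w < maxn x (p x)))) //.
  rewrite count_int; congr (_ - _); apply/minn_idPr.
    by rewrite geq_max (ltnW xn) (ltnW pxn).
  by apply: leq_trans mM _; rewrite geq_max (ltnW xn) (ltnW pxn).
have e1 : count sb s = count (fun y => (y < p y) && sb y) s + count (fun y => (y < p y) && sb (p y)) s.
  rewrite -(count_split s (fun y => y < p y) sb); congr (_ + _).
  rewrite (@count_swap n p (fun y => ~~ (y < p y) && sb y) H).
  apply: eq_in_count => y; rewrite mem_iota add0n => yn /=.
  case: (P y yn) => _ ne ->; congr (_ && _); move: ne; by case: ltngtP.
have e2 := count_xor s (fun y => (y < p y) && sb y) (fun y => (y < p y) && sb (p y)).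
have sbx : sb x = false by rewrite /sb sbE; case: ifP => _; rewrite ltnn ?andbF.
have sbpx : sb (p x) = false by rewrite /sb sbE; case: ifP => _; rewrite ltnn ?andbF.
have e3 : count (fun y => ((y < p y) && sb y) (+) ((y < p y) && sb (p y))) s = ncross n p x.
  rewrite /ncross; apply: eq_in_count => y _ /=; rewrite /cross -/sb.
  case: (eqVneq y x) => [->|nyx]; first by rewrite sbx sbpx !andbF.
  case: (eqVneq y (p x)) => [->|nypx]; first by rewrite ppx sbx sbpx !andbF.
  by case: (y < p y).
rewrite -e3; have <- : odd (maxn x (p x) - (minn x (p x)).+1) = odd (count (fun y => ((y < p y) && sb y) (+) ((y < p y) && sb (p y))) s).
  by rewrite -e0 e1 e2 oddD oddM.
rewrite -(addn_min_max x (p x)).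
move: mM; set m := minn x (p x); set M := maxn x (p x) => mM.
have [t ->] : exists t, M = m.+1 + t by exists (M - m.+1); rewrite subnKC.
rewrite addKn addnA addnS addSn addnn oddS oddD odd_double negbK.
by case: (odd t).
Qed.

Section Cap.
Variables (n i : nat) (p : nat -> nat).
Hypothesis Hn : 2 <= n.
Hypothesis Hi : i < n.
Local Notation j := (i.+1 %% n).
Local Notation rest := (cap_rest n i).

Lemma j_lt : j < n.
Proof. by rewrite ltn_pmod // (leq_trans _ Hn). Qed.

Lemma j_ne : j != i.
Proof.
case: (ltnP i.+1 n) => h; first by rewrite modn_small // (gtn_eqF (ltnSn i)).
have e : i.+1 = n by apply/eqP; rewrite eqn_leq Hi h.
rewrite e modnn; apply/eqP => e0; move: e Hn; rewrite -e0 => <-. by [].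
Qed.

Lemma mem_rest x : (x \in rest) = [&& x < n, x != i & x != j].
Proof. by rewrite mem_filter mem_iota add0n andbC andbA. Qed.

Lemma rest_uniq : uniq rest.
Proof. exact: filter_uniq (iota_uniq 0 n). Qed.

Lemma rest_sorted : sorted ltn rest.
Proof. by apply: sorted_filter; [exact: ltn_trans | exact: iota_ltn_sorted]. Qed.

Lemma count_ij x : count (fun y => (y == i) || (y == j)) (iota 0 x) = (i < x) + (j < x).
Proof.
have := count_predUI (pred1 i) (pred1 j) (iota 0 x).
rewrite (@eq_count _ (predI (pred1 i) (pred1 j)) pred0); last first.
  move=> y /=; apply/negbTE/andP => -[/eqP -> /eqP e]; move: j_ne; by rewrite -e eqxx.
rewrite count_pred0 addn0 => ->.
by rewrite !count_uniq_mem ?iota_uniq // !mem_iota.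
Qed.

Lemma rest_size : size rest = n - 2.
Proof.
rewrite size_filter.
have := count_predC (fun x => (x != i) && (x != j)) (iota 0 n).
have -> : count (predC (fun x => (x != i) && (x != j))) (iota 0 n) = count (fun y => (y==i)||(y==j)) (iota 0 n).
  by apply: eq_count => y /=; rewrite negb_and !negbK.
rewrite size_iota count_ij Hi j_lt /= => e; by rewrite -[in RHS]e addnK.
Qed.

Lemma index_rest x : x \in rest -> index x rest + ((i < x) + (j < x)) = x.
Proof.
rewrite mem_rest => /and3P [xn xi xj].
have e : iota 0 n = iota 0 x ++ x :: iota x.+1 (n - x.+1).
  by rewrite -{1}(subnKC (ltnW xn)) iotaD add0n -(subnSK xn).
rewrite /cap_rest e filter_cat index_cat.
rewrite mem_filter mem_iota ltnn andbF /= xi xj /= eqxx addn0 size_filter -count_ij.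
have := count_predC (fun x => (x != i) && (x != j)) (iota 0 x).
have -> : count (predC (fun x => (x != i) && (x != j))) (iota 0 x) = count (fun y => (y==i)||(y==j)) (iota 0 x).
  by apply: eq_count => y /=; rewrite negb_and !negbK.
by rewrite size_iota.
Qed.

Lemma odd_shift x : x \in rest -> odd ((i < x) + (j < x)) = (i.+1 == n).
Proof.
rewrite mem_rest => /and3P [xn xi xj].
case: (ltnP i.+1 n) => h.
  move: xj; rewrite modn_small // => xj; rewrite (ltn_eqF h).
  case: (ltngtP i x) xi => // h1 _; last by rewrite ltnNge (leqW (ltnW h1)).
  have h2 : i.+1 < x by rewrite ltn_neqAle eq_sym xj h1.
  by rewrite h2.
have e : i.+1 = n by apply/eqP; rewrite eqn_leq Hi h.
move: xj; rewrite e modnn eqxx => xj.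
by rewrite leqNgt xn lt0n xj.
Qed.

Lemma index_mono u v : u \in rest -> v \in rest -> (index u rest < index v rest) = (u < v).
Proof.
move=> ur vr; apply/idP/idP => h.
  exact: (sorted_ltn_index ltn_trans rest_sorted u v ur vr h).
case: (ltngtP (index u rest) (index v rest)) => // h2.
  have := sorted_ltn_index ltn_trans rest_sorted v u vr ur h2; by rewrite ltnNge (ltnW h).
have : nth 0 rest (index u rest) = nth 0 rest (index v rest) by rewrite h2.
by rewrite !nth_index // => e; move: h; rewrite e ltnn.
Qed.

Lemma index_parity u v : u \in rest -> v \in rest ->
  odd (index u rest + index v rest) = odd (u + v).
Proof.
move=> ur vr.
move: (index_rest ur) (index_rest vr) (odd_shift ur) (odd_shift vr).
set a := (i < u) + (j < u); set b := (i < v) + (j < v).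
move=> e1 e2 ha hb; clearbody a b; rewrite -[in RHS]e1 -[in RHS]e2 !oddD ha hb.
by case: (odd (index u rest)); case: (odd (index v rest)); case: (i.+1 == n).
Qed.

End Cap.

Lemma isE_odd m q : is_pairing m q -> isE m q = all (fun y => odd (y + q y)) (iota 0 m).
Proof.
move=> H; apply: eq_in_all => y; rewrite mem_iota add0n => yn.
by rewrite (L1 H yn) negbK.
Qed.

Section Cap2.
Variables (n i : nat) (p : nat -> nat).
Hypothesis Hn : 2 <= n.
Hypothesis Hi : i < n.
Hypothesis Hp : is_pairing n p.
Local Notation j := (i.+1 %% n).
Local Notation rest := (cap_rest n i).
Local Notation g := (cap_glue n p i).

Lemma glue_inv x : x \in rest -> [/\ g x \in rest, g x != x & g (g x) = x].
Proof.
rewrite mem_rest // => /and3P [xn xi xj].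
have P := pairingP Hp.
case: (P x xn) => pxn pxx ppx; case: (P i Hi) => pin pii ppi.
case: (P j (j_lt i Hn)) => pjn pjj ppj.
have jne := j_ne Hn Hi.
rewrite /cap_glue.
case: (eqVneq (p x) i) => [e|ne1].
  have xe : x = p i by rewrite -e ppx.
  have pji : p j != i.
    by apply/eqP => h; have := congr1 p h; rewrite ppj => e2; move: xj; rewrite xe -e2 eqxx.
  have pjx : p j != x.
    apply/eqP => h; have : p x = j by rewrite -h ppj.
    by rewrite e => ij; move: jne; rewrite -ij eqxx.
  rewrite ppj (negbTE jne) eqxx -xe; split => //.
  by rewrite mem_rest // pjn pji pjj.
case: (eqVneq (p x) j) => [e|ne2].
  have pij : p i != j.
    by apply/eqP => h; move: xi; rewrite -ppx e -h ppi eqxx.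
  have pix : p i != x.
    by apply/eqP => h; move: ne1; rewrite -h ppi eqxx.
  rewrite ppi eqxx -e ppx; split => //.
  by rewrite mem_rest // pin pii pij.
rewrite ppx (negbTE xi) (negbTE xj); split => //.
by rewrite mem_rest // pxn ne1 ne2.
Qed.

Lemma cap_val x : x \in rest -> cap n p i (index x rest) = index (g x) rest.
Proof. by move=> xr; rewrite /cap nth_index. Qed.

Lemma cap_pairing : is_pairing (n - 2) (cap n p i).
Proof.
apply/allP => y; rewrite mem_iota add0n => yn; rewrite -(rest_size Hn Hi) in yn.
have xr : nth 0 rest y \in rest := mem_nth 0 yn.
have ey : y = index (nth 0 rest y) rest by rewrite index_uniq // (rest_uniq n i).
move: xr; set x := nth 0 rest y => xr.
case: (glue_inv xr) => gr gx ggx.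
rewrite ey cap_val //; apply/and3P; split.
- by rewrite -(rest_size Hn Hi) index_mem.
- apply/eqP => h; have : nth 0 rest (index (g x) rest) = nth 0 rest (index x rest) by rewrite h.
  by rewrite !nth_index // => h2; move: gx; rewrite h2 eqxx.
- by rewrite cap_val // ggx.
Qed.

End Cap2.

Lemma modS_small n i : i.+1 < n -> i.+1 %% n = i.+1.
Proof. exact: modn_small. Qed.
Lemma modS_last n : 0 < n -> n.-1.+1 %% n = 0.
Proof. by move=> h; rewrite prednK // modnn. Qed.

Lemma free2 n a b : 8 <= n -> a < b -> b < n ->
  exists i, [/\ i < n, i <> a, i <> b, i.+1 %% n <> a & i.+1 %% n <> b].
Proof.
move=> h8 ab bn.
case: (leqP 2 a) => h1.
  exists 0; rewrite modS_small; last by nlia.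
  split; nlia.
case: (leqP (a + 3) b) => h2.
  exists a.+1; rewrite modS_small; last by nlia.
  split; nlia.
case: (leqP (b + 3) n) => h3.
  exists b.+1; rewrite modS_small; last by nlia.
  split; nlia.
nlia.
Qed.

Lemma free4 n a b c d : 8 <= n -> a < b -> b < c -> c < d -> d < n ->
  odd (a + c) -> odd (b + d) ->
  exists i, [/\ i < n, i <> a, i <> b, i <> c & i <> d] /\
            [/\ i.+1 %% n <> a, i.+1 %% n <> b, i.+1 %% n <> c & i.+1 %% n <> d].
Proof.
move=> h8 ab bc cd dn o1 o2.
have e1 : ((a + c)./2 * 2).+1 = a + c by rewrite -[in RHS](odd_double_half (a + c)) o1 muln2.
case: (leqP 2 a) => h1.
  exists 0; rewrite modS_small; last by nlia.
  split; split; nlia.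
case: (leqP (a + 3) b) => h2.
  exists a.+1; rewrite modS_small; last by nlia.
  split; split; nlia.
case: (leqP (b + 3) c) => h3.
  exists b.+1; rewrite modS_small; last by nlia.
  split; split; nlia.
case: (leqP (c + 3) d) => h4.
  exists c.+1; rewrite modS_small; last by nlia.
  split; split; nlia.
case: (leqP (d + 3) n) => h5.
  exists d.+1; rewrite modS_small; last by nlia.
  split; split; nlia.
case: (leqP 1 a) => h6; last by nlia.
case: (leqP (d + 2) n) => h7; last by nlia.
exists n.-1; rewrite modS_last; last by nlia.
split; split; nlia.
Qed.

Ltac fin4 h8 h1 h2 h3 := let i := fresh "i" in
  have [i [[? ? ? ? ?] [? ? ? ?]]] := free4 h8 h1 h2 h3 ltac:(assumption) ltac:(assumption) ltac:(assumption);
  exists i; split => // v; case=> [->|[->|[->|->]]]; split; assumption.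

Lemma free4s n x y z w : 8 <= n -> x < n -> y < n -> z < n -> w < n ->
  odd (x + y) -> odd (z + w) ->
  (x < z /\ z < y /\ y < w) \/ (x < w /\ w < y /\ y < z) \/ (y < z /\ z < x /\ x < w) \/
  (y < w /\ w < x /\ x < z) \/ (z < x /\ x < w /\ w < y) \/ (z < y /\ y < w /\ w < x) \/
  (w < x /\ x < z /\ z < y) \/ (w < y /\ y < z /\ z < x) ->
  exists i, i < n /\ (forall v, v = x \/ v = y \/ v = z \/ v = w -> i <> v /\ i.+1 %% n <> v).
Proof.
move=> h8 xn yn zn wn oxy ozw H.
have oyx : odd (y + x) by rewrite addnC.
have owz : odd (w + z) by rewrite addnC.
do 7 (case: H => [[h1 [h2 h3]]|H]; first by fin4 h8 h1 h2 h3).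
case: H => h1 [h2 h3]; fin4 h8 h1 h2 h3.
Qed.

Lemma mem_restP n i w : w < n -> i <> w -> i.+1 %% n <> w -> w \in cap_rest n i.
Proof.
move=> wn h1 h2; rewrite mem_rest wn /=; apply/andP; split; apply/eqP => e;
  [exact: h1 (esym e) | exact: h2 (esym e)].
Qed.

Lemma glue_eq n p i w : i <> p w -> i.+1 %% n <> p w -> cap_glue n p i w = p w.
Proof.
move=> h1 h2; rewrite /cap_glue; case: eqP => [e|_]; first by case: h1.
by case: eqP => [e|_] //; case: h2.
Qed.

Lemma odd_ij n i : ~~ odd n -> i < n -> odd (i + i.+1 %% n).
Proof.
move=> ev Hi; case: (ltnP i.+1 n) => h.
  by rewrite modn_small // addnS oddS addnn odd_double.
have e : i.+1 = n by apply/eqP; rewrite eqn_leq Hi h.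
rewrite e modnn addn0; move: ev; by rewrite -e oddS negbK.
Qed.

Lemma glue_odd n p i u : is_pairing n p -> 2 <= n -> i < n -> ~~ odd n ->
  (forall y, y < n -> odd (y + p y)) -> u \in cap_rest n i -> odd (u + cap_glue n p i u).
Proof.
move=> Hp Hn Hi ev Ho ur; have P := pairingP Hp.
have jn := j_lt i Hn.
have oi := Ho i Hi; have oj := Ho _ jn; have oij := odd_ij ev Hi.
move: ur; rewrite mem_rest => /and3P [un _ _].
rewrite /cap_glue; case: eqP => [e|_].
  case: (P u un) => _ _ ppu.
  have -> : u = p i by rewrite -e ppu.
  move: oi oj oij; rewrite !oddD.
  by case: (odd i); case: (odd (p i)); case: (odd (i.+1 %% n)); case: (odd (p (i.+1 %% n))).
case: eqP => [e|_]; last exact: Ho.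
case: (P u un) => _ _ ppu.
have -> : u = p (i.+1 %% n) by rewrite -e ppu.
move: oi oj oij; rewrite !oddD.
by case: (odd i); case: (odd (p i)); case: (odd (i.+1 %% n)); case: (odd (p (i.+1 %% n))).
Qed.

Theorem lemma4p4 (k l : nat) (p : nat -> nat) :
  is_pairing (k + l) p ->
  ~~ isN (k + l) p ->
  4 <= (k + l)./2 ->
  (~~ isE (k + l) p ->
     exists i : nat, (i < k + l) && ~~ isE (k + l - 2) (cap (k + l) p i)) /\
  (isE (k + l) p ->
     exists i : nat, [&& i < k + l, isE (k + l - 2) (cap (k + l) p i)
                       & ~~ isN (k + l - 2) (cap (k + l) p i)]).
Proof.
move: (k + l) => n Hp HN Hh.
have h8 : 8 <= n.
  have := odd_double_half n; rewrite -muln2 => e; nlia.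
have Hn2 : 2 <= n by apply: leq_trans h8.
have ev := pairing_even Hp.
have P := pairingP Hp.
split.
  rewrite (isE_odd Hp) => /allPn [x]; rewrite mem_iota add0n => xn ox.
  case: (P x xn) => pxn pxx ppx.
  have [i [i1 i2 i3 i4 i5]] : exists i, [/\ i < n, i <> x, i <> p x, i.+1 %% n <> x & i.+1 %% n <> p x].
    case: (ltngtP x (p x)) => h; last by move: pxx; rewrite -h eqxx.
      have [i [? ? ? ? ?]] := free2 h8 h pxn; by exists i.
    have [i [? ? ? ? ?]] := free2 h8 h xn; by exists i.
  have xr := mem_restP xn i2 i4.
  have pxr := mem_restP pxn i3 i5.
  exists i; rewrite i1 /= (isE_odd (cap_pairing Hn2 i1 Hp)); apply/allPn.
  exists (index x (cap_rest n i)).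
    by rewrite mem_iota add0n -(rest_size Hn2 i1) index_mem.
  by rewrite cap_val // glue_eq // (index_parity Hn2 i1 xr pxr).
move=> HE.
have Ho : forall y, y < n -> odd (y + p y).
  by move: HE; rewrite (isE_odd Hp) => /allP H y yn; apply: H; rewrite mem_iota.
move: HN => /allPn [x]; rewrite mem_iota add0n => xn nc.
have : has (fun y => [&& y < p y, y != x, y != p x & cross x (p x) y (p y)]) (iota 0 n).
  by rewrite has_count lt0n.
case/hasP => z; rewrite mem_iota add0n => zn /and4P [zpz zx zpx cr].
case: (P x xn) => pxn pxx ppx; case: (P z zn) => pzn pzz ppz.
have pzx : p z != x by apply/eqP => e; move: zpx; rewrite -e ppz eqxx.
have pzpx : p z != p x by apply/eqP => e; move: zx; rewrite -ppz e ppx eqxx.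
have [i [i1 Hi]] : exists i, i < n /\ (forall v, v = x \/ v = p x \/ v = z \/ v = p z -> i <> v /\ i.+1 %% n <> v).
  apply: free4s => //; first exact: Ho; first exact: Ho.
  move: cr; rewrite /cross !sbE.
  case: ifP; case: (ltnP x z); case: (ltnP z (p x)); case: (ltnP x (p z)); case: (ltnP (p z) (p x));
    case: (ltnP (p x) z); case: (ltnP z x); case: (ltnP (p x) (p z)); case: (ltnP (p z) x);
    move=> //= *; first [ by intuition | exfalso; nlia ].
have [ix jx] := Hi x ltac:(tauto).
have [ipx jpx] := Hi (p x) ltac:(tauto).
have [iz jz] := Hi z ltac:(tauto).
have [ipz jpz] := Hi (p z) ltac:(tauto).
have xr := mem_restP xn ix jx.
have pxr := mem_restP pxn ipx jpx.
have zr := mem_restP zn iz jz.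
have pzr := mem_restP pzn ipz jpz.
exists i; rewrite i1 /=; apply/andP; split.
  rewrite (isE_odd (cap_pairing Hn2 i1 Hp)); apply/allP => y.
  rewrite mem_iota add0n -(rest_size Hn2 i1) => yn.
  have ur : nth 0 (cap_rest n i) y \in cap_rest n i := mem_nth 0 yn.
  have ey : y = index (nth 0 (cap_rest n i) y) (cap_rest n i) by rewrite index_uniq // rest_uniq.
  move: ur ey; set u := nth 0 (cap_rest n i) y => ur ->.
  have [gr _ _] := glue_inv Hn2 i1 Hp ur.
  by rewrite cap_val // (index_parity Hn2 i1 ur gr) (glue_odd Hp Hn2 i1 ev Ho ur).
apply/allPn; exists (index x (cap_rest n i)).
  by rewrite mem_iota add0n -(rest_size Hn2 i1) index_mem.
rewrite -lt0n -has_count; apply/hasP; exists (index z (cap_rest n i)).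
  by rewrite mem_iota add0n -(rest_size Hn2 i1) index_mem.
have injI : forall u v, u \in cap_rest n i -> v \in cap_rest n i -> u != v ->
    index u (cap_rest n i) != index v (cap_rest n i).
  move=> u v ur vr uv; apply/eqP => e; have := congr1 (nth 0 (cap_rest n i)) e.
  by rewrite !nth_index // => e'; move: uv; rewrite e' eqxx.
rewrite !cap_val // !glue_eq //; apply/and4P; split.
- by rewrite (index_mono zr pzr).
- exact: injI.
- exact: injI.
- move: cr; rewrite /cross !sbE.
  by rewrite !index_mono.
Qed.
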